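(* Let $\alpha: I\to M$ be a unit-speed curve on an oriented surface $M\subset E^3$ with Darboux frame $\{T,V,U\}$ and curvatures $k_g,k_n,\tau_g$. Consider the curve $\gamma$ defined in either of the following two cases: (a) $k_g\equiv0$, $c_{10},c_{11}$ real constants, and $\gamma(s)=\alpha(s)+(c_{10}-s)T(s)+c_{11}V(s)$; (b) $k_g$ nowhere zero, $\theta$ an antiderivative of $k_g$, $S$ and $C$ antiderivatives of $\sin\theta$ and $\cos\theta$ respectively, $c_{12},c_{13}$ real constants, $$y_2=c_{12}\cos\theta+c_{13}\sin\theta-S\cos\theta+C\sin\theta,\qquad y_1=-\sin\theta\,(S-c_{12})-\cos\theta\,(C+c_{13}),$$ and $\gamma(s)=\alpha(s)+y_1(s)T(s)+y_2(s)V(s)$. In either case assume $\gamma$ is regular. Then $\gamma$ is a general helix if and only if $\alpha$ is an isophote curve on $M$.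
   Context: $M$ is an oriented surface in Euclidean 3-space $E^3$ and $\alpha:I\to M$ is a unit-speed curve with arc-length parameter $s$. Its Darboux frame $\{T,V,U\}$ consists of the unit tangent $T=\alpha'$, the unit surface normal $U$ of $M$ along $\alpha$, and $V=U\times T$; it satisfies $T'=k_gV+k_nU$, $V'=-k_gT+\tau_gU$, $U'=-k_nT-\tau_gV$, where $k_g,k_n,\tau_g$ are the geodesic curvature, normal curvature and geodesic torsion. A regular curve is a general helix if its unit tangent makes a constant angle with a fixed direction. $\alpha$ is an isophote curve if $\langle U,l\rangle$ is constant for some fixed unit vector $l$. *)

(* Defs.v *)
From Stdlib Require Import Reals.
From Coquelicot Require Import Coquelicot.
Open Scope R_scope.

Record vec3 := mkV { vx : R; vy : R; vz : R }.

Definition vadd (u v : vec3) : vec3 := mkV (vx u + vx v) (vy u + vy v) (vz u + vz v).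
Definition vscale (a : R) (u : vec3) : vec3 := mkV (a * vx u) (a * vy u) (a * vz u).
Definition vdot (u v : vec3) : R := vx u * vx v + vy u * vy v + vz u * vz v.
Definition vnorm (u : vec3) : R := sqrt (vdot u u).
Definition vcross (u v : vec3) : vec3 :=
  mkV (vy u * vz v - vz u * vy v) (vz u * vx v - vx u * vz v) (vx u * vy v - vy u * vx v).
Definition vzero : vec3 := mkV 0 0 0.

Definition in_I (a b : Rbar) (s : R) : Prop := Rbar_lt a s /\ Rbar_lt s b.

Definition vderive (f : R -> vec3) (s : R) (d : vec3) : Prop :=
  is_derive (fun t => vx (f t)) s (vx d) /\
  is_derive (fun t => vy (f t)) s (vy d) /\
  is_derive (fun t => vz (f t)) s (vz d).

(* Darboux frame {T,V,U} of the unit-speed curve alpha on I, with U the unit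
   surface normal along alpha, V = U x T, and curvatures kg, kn, taug. *)
Definition darboux_frame (a b : Rbar) (alpha T V U : R -> vec3)
    (kg kn taug : R -> R) : Prop :=
  forall s, in_I a b s ->
    vderive alpha s (T s) /\
    vnorm (T s) = 1 /\ vnorm (U s) = 1 /\ vdot (U s) (T s) = 0 /\
    V s = vcross (U s) (T s) /\
    vderive T s (vadd (vscale (kg s) (V s)) (vscale (kn s) (U s))) /\
    vderive V s (vadd (vscale (- kg s) (T s)) (vscale (taug s) (U s))) /\
    vderive U s (vadd (vscale (- kn s) (T s)) (vscale (- taug s) (V s))).

Definition regular_on (a b : Rbar) (gamma : R -> vec3) : Prop :=
  exists gamma' : R -> vec3, forall s, in_I a b s ->
    vderive gamma s (gamma' s) /\ gamma' s <> vzero.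

Definition general_helix (a b : Rbar) (gamma : R -> vec3) : Prop :=
  exists (gamma' : R -> vec3) (d : vec3) (c : R),
    vnorm d = 1 /\
    forall s, in_I a b s ->
      vderive gamma s (gamma' s) /\
      gamma' s <> vzero /\
      vdot (vscale (/ vnorm (gamma' s)) (gamma' s)) d = c.

Definition isophote (a b : Rbar) (U : R -> vec3) : Prop :=
  exists (l : vec3) (c : R), vnorm l = 1 /\
    forall s, in_I a b s -> vdot (U s) l = c.

Definition case_a (a b : Rbar) (alpha T V : R -> vec3) (kg : R -> R)
    (gamma : R -> vec3) : Prop :=
  exists c10 c11 : R, forall s, in_I a b s ->
    kg s = 0 /\
    gamma s = vadd (alpha s) (vadd (vscale (c10 - s) (T s)) (vscale c11 (V s))).

Definition case_b (a b : Rbar) (alpha T V : R -> vec3) (kg : R -> R)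
    (gamma : R -> vec3) : Prop :=
  exists (theta S C : R -> R) (c12 c13 : R), forall s, in_I a b s ->
    kg s <> 0 /\
    is_derive theta s (kg s) /\
    is_derive S s (sin (theta s)) /\
    is_derive C s (cos (theta s)) /\
    let y2 := c12 * cos (theta s) + c13 * sin (theta s)
              - S s * cos (theta s) + C s * sin (theta s) in
    let y1 := - sin (theta s) * (S s - c12) - cos (theta s) * (C s + c13) in
    gamma s = vadd (alpha s) (vadd (vscale y1 (T s)) (vscale y2 (V s))).

(* Main.v *)
Require Import Defs.
From Stdlib Require Import Reals Lra Psatz Classical.
From Coquelicot Require Import Coquelicot.
Open Scope R_scope.

Lemma in_I_loc a b s : in_I a b s -> locally s (in_I a b).
Proof.
  intros [H1 H2]. unfold in_I.
  apply filter_and.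
  - exact (open_Rbar_gt' s a H1).
  - exact (open_Rbar_lt' s b H2).
Qed.

Lemma in_I_between a b x y t : in_I a b x -> in_I a b y -> x <= t <= y -> in_I a b t.
Proof.
  intros [H1 H2] [H3 H4] [H5 H6]; split.
  - eapply Rbar_lt_le_trans; [exact H1|]. simpl; exact H5.
  - eapply Rbar_le_lt_trans; [|exact H4]. simpl; exact H6.
Qed.

Lemma vderive_unique f s d1 d2 : vderive f s d1 -> vderive f s d2 -> d1 = d2.
Proof.
  intros (A1&B1&C1) (A2&B2&C2).
  apply is_derive_unique in A1, B1, C1, A2, B2, C2.
  destruct d1, d2; simpl in *; f_equal; congruence.
Qed.

Lemma vderive_ext_loc f g s d : locally s (fun t => f t = g t) -> vderive f s d -> vderive g s d.
Proof.
  intros Hl (A&B&C); repeat split;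
  (eapply is_derive_ext_loc; [|eassumption]);
  (eapply filter_imp; [|exact Hl]); intros t ->; reflexivity.
Qed.

Lemma D_plus (f g : R -> R) x a b l : is_derive f x a -> is_derive g x b -> l = a + b ->
  is_derive (fun t => f t + g t) x l.
Proof. intros A B ->. apply (is_derive_plus f g x a b A B). Qed.

Lemma D_mult (f g : R -> R) x a b l : is_derive f x a -> is_derive g x b -> l = a * g x + f x * b ->
  is_derive (fun t => f t * g t) x l.
Proof. intros A B ->. apply (is_derive_mult f g x a b A B). intros; apply Rmult_comm. Qed.

Lemma D_const (c : R) x : is_derive (fun _ => c) x 0.
Proof. apply (is_derive_const c x). Qed.

Lemma D_id x : is_derive (fun t => t) x 1.
Proof. apply (is_derive_id x). Qed.

Lemma D_mulc (f : R -> R) x a c : is_derive f x a -> is_derive (fun t => f t * c) x (a * c).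
Proof. intros A. eapply D_mult; [exact A| apply D_const| ring]. Qed.

Lemma vdot_derive f s d l : vderive f s d -> is_derive (fun t => vdot (f t) l) s (vdot d l).
Proof.
  intros (A&B&C). unfold vdot.
  apply (D_plus (fun t => vx (f t) * vx l + vy (f t) * vy l) (fun t => vz (f t) * vz l) s
     (vx d * vx l + vy d * vy l) (vz d * vz l)); [|apply D_mulc; exact C|reflexivity].
  apply (D_plus (fun t => vx (f t) * vx l) (fun t => vy (f t) * vy l) s
     (vx d * vx l) (vy d * vy l)); [apply D_mulc; exact A|apply D_mulc; exact B|reflexivity].
Qed.

Lemma comp3 (a t v y1 y2 : R -> R) s A TT VV y1' y2' :
  is_derive a s A -> is_derive t s TT -> is_derive v s VV ->
  is_derive y1 s y1' -> is_derive y2 s y2' ->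
  is_derive (fun u => a u + (y1 u * t u + y2 u * v u)) s
    (A + (y1' * t s + y1 s * TT + (y2' * v s + y2 s * VV))).
Proof.
  intros HA HT HV H1 H2.
  apply (D_plus a (fun u => y1 u * t u + y2 u * v u) s A (y1' * t s + y1 s * TT + (y2' * v s + y2 s * VV))); [exact HA| |reflexivity].
  apply (D_plus (fun u => y1 u * t u) (fun u => y2 u * v u) s (y1' * t s + y1 s * TT) (y2' * v s + y2 s * VV)); [| |reflexivity].
  - apply (D_mult y1 t s y1' TT); auto.
  - apply (D_mult y2 v s y2' VV); auto.
Qed.

Lemma vderive_comb alpha T V (y1 y2 : R -> R) s A TT VV y1' y2' :
  vderive alpha s A -> vderive T s TT -> vderive V s VV ->
  is_derive y1 s y1' -> is_derive y2 s y2' ->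
  vderive (fun t => vadd (alpha t) (vadd (vscale (y1 t) (T t)) (vscale (y2 t) (V t)))) s
    (vadd A (vadd (vadd (vscale y1' (T s)) (vscale (y1 s) TT))
                  (vadd (vscale y2' (V s)) (vscale (y2 s) VV)))).
Proof.
  intros (A1&A2&A3) (T1&T2&T3) (V1&V2&V3) Y1 Y2.
  unfold vderive, vadd, vscale; simpl.
  split; [|split]; [exact (comp3 _ _ _ _ _ _ _ _ _ _ _ A1 T1 V1 Y1 Y2)|exact (comp3 _ _ _ _ _ _ _ _ _ _ _ A2 T2 V2 Y1 Y2)|exact (comp3 _ _ _ _ _ _ _ _ _ _ _ A3 T3 V3 Y1 Y2)].
Qed.

Lemma push_right h x l y : derivable_pt_lim h x l -> 0 < l -> x < y ->
  exists t, x < t <= y /\ h x < h t.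
Proof.
  intros H Hl Hxy.
  destruct (H l Hl) as [[d Hd] Hdel]. simpl in Hdel.
  set (hh := Rmin (d/2) (y - x)).
  assert (Hh0 : 0 < hh) by (unfold hh; apply Rmin_pos; lra).
  assert (Hh1 : hh <= d/2) by apply Rmin_l.
  assert (Hh2 : hh <= y - x) by apply Rmin_r.
  specialize (Hdel hh ltac:(lra) ltac:(rewrite Rabs_pos_eq; lra)).
  apply Rabs_def2 in Hdel. destruct Hdel as [_ Hq].
  assert (Hq' : 0 < (h (x + hh) - h x) / hh) by lra.
  exists (x + hh). split; [lra|].
  assert (0 < h (x + hh) - h x); [|lra].
  replace (h (x + hh) - h x) with ((h (x + hh) - h x) / hh * hh) by (field; lra).
  apply Rmult_lt_0_compat; lra.
Qed.

Lemma push_left h x l y : derivable_pt_lim h x l -> l < 0 -> y < x ->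
  exists t, y <= t < x /\ h x < h t.
Proof.
  intros H Hl Hxy.
  destruct (H (- l) ltac:(lra)) as [[d Hd] Hdel]. simpl in Hdel.
  set (hh := Rmin (d/2) (x - y)).
  assert (Hh0 : 0 < hh) by (unfold hh; apply Rmin_pos; lra).
  assert (Hh1 : hh <= d/2) by apply Rmin_l.
  assert (Hh2 : hh <= x - y) by apply Rmin_r.
  specialize (Hdel (- hh) ltac:(lra) ltac:(rewrite Rabs_Ropp, Rabs_pos_eq; lra)).
  apply Rabs_def2 in Hdel. destruct Hdel as [Hq _].
  assert (Hq' : (h (x + - hh) - h x) / - hh < 0) by lra.
  exists (x + - hh). split; [lra|].
  assert (0 < h (x + - hh) - h x); [|lra].
  replace (h (x + - hh) - h x) with (- ((h (x + - hh) - h x) / - hh) * hh) by (field; lra).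
  apply Rmult_lt_0_compat; lra.
Qed.

Lemma darb_pos h h' x y : x <= y ->
  (forall t, x <= t <= y -> derivable_pt_lim h t (h' t) /\ h' t <> 0) ->
  0 < h' x -> 0 < h' y.
Proof.
  intros Hxy Hd Hx.
  destruct (Rlt_or_le 0 (h' y)) as [Hy|Hy]; [exact Hy|].
  assert (Hy' : h' y < 0) by (destruct (Hd y ltac:(lra)) as [_ Hn]; lra).
  destruct (Req_dec x y) as [E|Nxy]; [subst; lra|].
  destruct (continuity_ab_maj h x y Hxy) as [M [HM HMr]].
  { intros c Hc. destruct (Hd c Hc) as [Hc1 _].
    exact (derivable_continuous_pt h c (exist _ (h' c) Hc1)). }
  destruct (Hd M HMr) as [HdM HnM].
  destruct (Rlt_or_le 0 (h' M)) as [Hp|Hn].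
  - destruct (Req_dec M y) as [E|NE]; [subst; lra|].
    destruct (push_right h M (h' M) y HdM Hp ltac:(lra)) as [t [Ht1 Ht2]].
    specialize (HM t ltac:(lra)). lra.
  - assert (Hn' : h' M < 0) by lra.
    destruct (Req_dec M x) as [E|NE]; [subst; lra|].
    destruct (push_left h M (h' M) x HdM Hn' ltac:(lra)) as [t [Ht1 Ht2]].
    specialize (HM t ltac:(lra)). lra.
Qed.

Lemma darb_neg h h' x y : x <= y ->
  (forall t, x <= t <= y -> derivable_pt_lim h t (h' t) /\ h' t <> 0) ->
  h' x < 0 -> h' y < 0.
Proof.
  intros Hxy Hd Hx.
  assert (0 < - h' y); [|lra].
  apply (darb_pos (fun t => - h t) (fun t => - h' t) x y Hxy); [|lra].
  intros t Ht. destruct (Hd t Ht) as [A B]. split; [|lra].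
  apply is_derive_Reals. apply is_derive_Reals in A.
  apply (is_derive_opp h t (h' t) A).
Qed.

Lemma darb_iff h h' x y : x <= y ->
  (forall t, x <= t <= y -> derivable_pt_lim h t (h' t) /\ h' t <> 0) ->
  (0 < h' x <-> 0 < h' y).
Proof.
  intros Hxy Hd. split; intro H.
  - exact (darb_pos h h' x y Hxy Hd H).
  - destruct (Rlt_or_le 0 (h' x)) as [A|A]; [exact A|].
    assert (h' x < 0) by (destruct (Hd x ltac:(lra)) as [_ Hn]; lra).
    pose proof (darb_neg h h' x y Hxy Hd H0). lra.
Qed.

Lemma vdot_scale k u w : vdot (vscale k u) w = k * vdot u w.
Proof. destruct u, w; unfold vdot, vscale; simpl; ring. Qed.

Lemma vdot_self_1 u : vnorm u = 1 -> vdot u u = 1.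
Proof.
  unfold vnorm. intros H.
  assert (0 <= vdot u u) by (destruct u; unfold vdot; simpl; nra).
  rewrite <- (sqrt_sqrt (vdot u u) H0), H. ring.
Qed.

Lemma vnorm_scale_unit g u : vnorm u = 1 -> vnorm (vscale g u) = Rabs g.
Proof.
  intros H. unfold vnorm.
  replace (vdot (vscale g u) (vscale g u)) with (Rsqr g * vdot u u) by (unfold Rsqr; destruct u; unfold vdot, vscale; simpl; ring).
  rewrite (vdot_self_1 u H), Rmult_1_r.
  apply sqrt_Rsqr_abs.
Qed.

Lemma sgn_pos g : 0 < g -> g / Rabs g = 1.
Proof. intros. rewrite Rabs_pos_eq by lra. field; lra. Qed.
Lemma sgn_neg g : g < 0 -> g / Rabs g = -1.
Proof. intros. rewrite Rabs_left by lra. field; lra. Qed.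

Lemma unit_dot g u d : g <> 0 -> vnorm u = 1 ->
  vdot (vscale (/ vnorm (vscale g u)) (vscale g u)) d = g / Rabs g * vdot u d.
Proof.
  intros Hg Hu. rewrite (vnorm_scale_unit g u Hu), !vdot_scale. unfold Rdiv. ring.
Qed.

Lemma vscale_nz g u : vnorm u = 1 -> vscale g u <> vzero -> g <> 0.
Proof.
  intros Hu H E. apply H. subst. destruct u; unfold vscale, vzero; simpl; f_equal; ring.
Qed.

Section Core.
Variables (a b : Rbar) (gamma U : R -> vec3) (g : R -> R).
Hypothesis HC : forall s, in_I a b s ->
  vderive gamma s (vscale (g s) (U s)) /\ g s <> 0 /\ vnorm (U s) = 1 /\
  exists Ud, vderive U s Ud.

Lemma phi_const d c x y : c <> 0 -> in_I a b x -> in_I a b y -> x <= y ->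
  (forall s, in_I a b s -> vdot (U s) d = c \/ vdot (U s) d = - c) ->
  vdot (U x) d = vdot (U y) d.
Proof.
  intros Hc Hx Hy Hxy Hv.
  set (phi := fun t => vdot (U t) d).
  change (phi x = phi y).
  assert (Hpx : phi x <> 0) by (unfold phi; destruct (Hv x Hx); lra).
  destruct (Req_dec (phi x) (phi y)) as [E|NE]; [exact E|exfalso].
  assert (Eyx : phi y = - phi x) by (unfold phi in *; destruct (Hv x Hx), (Hv y Hy); lra).
  destruct (Req_dec x y) as [->|Nxy]; [lra|].
  set (f := fun t => - (phi t * phi x)).
  destruct (Ranalysis5.IVT_interv f x y) as [z [Hz Hfz]].
  - intros t Ht. assert (HIt : in_I a b t) by exact (in_I_between a b x y t Hx Hy Ht).
    destruct (HC t HIt) as (_&_&_&Ud&HUd).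
    pose proof (vdot_derive U t Ud d HUd) as Hd.
    assert (Hf : is_derive f t (- (vdot Ud d * phi x))).
    { unfold f. apply (is_derive_opp (fun t => phi t * phi x)).
      apply D_mulc. exact Hd. }
    apply is_derive_Reals in Hf.
    exact (derivable_continuous_pt f t (exist _ _ Hf)).
  - lra.
  - unfold f. nra.
  - unfold f. rewrite Eyx. nra.
  - assert (HIz : in_I a b z) by exact (in_I_between a b x y z Hx Hy Hz).
    unfold f in Hfz. assert (phi z = 0).
    { apply (Rmult_eq_reg_r (phi x)); [|exact Hpx]. lra. }
    unfold phi in H. destruct (Hv z HIz); lra.
Qed.

Lemma core : general_helix a b gamma <-> isophote a b U.
Proof.
  split.
  - intros (gam' & d & c & Hd & H).
    assert (Hk : forall s, in_I a b s -> g s / Rabs (g s) * vdot (U s) d = c).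
    { intros s Hs. destruct (H s Hs) as (D1 & _ & E).
      destruct (HC s Hs) as (D2 & Hg & Hu & _).
      rewrite (vderive_unique _ _ _ _ D1 D2) in E.
      rewrite unit_dot in E; auto. }
    destruct (Req_dec c 0) as [->|Hc].
    + exists d, 0. split; [exact Hd|]. intros s Hs.
      specialize (Hk s Hs). destruct (HC s Hs) as (_&Hg&_).
      destruct (Rlt_or_le 0 (g s)).
      * rewrite sgn_pos in Hk; lra.
      * rewrite sgn_neg in Hk; lra.
    + assert (Hv : forall s, in_I a b s -> vdot (U s) d = c \/ vdot (U s) d = - c).
      { intros s Hs. specialize (Hk s Hs). destruct (HC s Hs) as (_&Hg&_).
        destruct (Rlt_or_le 0 (g s)).
        * rewrite sgn_pos in Hk; lra.
        * rewrite sgn_neg in Hk; lra. }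
      destruct (classic (exists s0, in_I a b s0)) as [[s0 Hs0]|Hne].
      * exists d, (vdot (U s0) d). split; [exact Hd|]. intros s Hs.
        destruct (Rle_dec s s0).
        -- exact (phi_const d c s s0 Hc Hs Hs0 r Hv).
        -- symmetry. exact (phi_const d c s0 s Hc Hs0 Hs ltac:(lra) Hv).
      * exists d, 0. split; [exact Hd|]. intros s Hs. exfalso. apply Hne. eauto.
  - intros (l & c & Hl & H).
    set (gam' := fun s => vscale (g s) (U s)).
    assert (Hk : forall s, in_I a b s ->
      vdot (vscale (/ vnorm (gam' s)) (gam' s)) l = g s / Rabs (g s) * c).
    { intros s Hs. destruct (HC s Hs) as (_&Hg&Hu&_). unfold gam'.
      rewrite unit_dot; auto. rewrite H; auto. }
    assert (Hbase : forall s, in_I a b s -> vderive gamma s (gam' s) /\ gam' s <> vzero).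
    { intros s Hs. destruct (HC s Hs) as (D&Hg&Hu&_). split; [exact D|].
      intro E. unfold gam' in E.
      assert (vnorm (vscale (g s) (U s)) = 0).
      { rewrite E. unfold vnorm, vdot, vzero; simpl. replace (0*0+0*0+0*0) with 0 by ring. apply sqrt_0. }
      rewrite vnorm_scale_unit in H0 by exact Hu.
      apply Hg. apply Rabs_eq_0. exact H0. }
    destruct (Req_dec c 0) as [->|Hc].
    + exists gam', l, 0. split; [exact Hl|]. intros s Hs.
      destruct (Hbase s Hs) as [A B]. split; [exact A|split; [exact B|]].
      rewrite Hk; auto. ring.
    + destruct (classic (exists s0, in_I a b s0)) as [[s0 Hs0]|Hne].
      * exists gam', l, (g s0 / Rabs (g s0) * c). split; [exact Hl|]. intros s Hs.
        destruct (Hbase s Hs) as [A B]. split; [exact A|split; [exact B|]].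
        rewrite Hk; auto. f_equal.
        assert (Hsg : forall x y, in_I a b x -> in_I a b y -> x <= y ->
                  (0 < g x * c <-> 0 < g y * c)).
        { intros x y Hx Hy Hxy.
          apply (darb_iff (fun t => vdot (gamma t) l) (fun t => g t * c) x y Hxy).
          intros t Ht. assert (HIt : in_I a b t) by exact (in_I_between a b x y t Hx Hy Ht).
          destruct (HC t HIt) as (D&Hg&Hu&_). split.
          - apply is_derive_Reals.
            pose proof (vdot_derive gamma t _ l D) as E.
            rewrite vdot_scale, H in E by exact HIt. exact E.
          - intro E. apply Rmult_integral in E. tauto. }
        assert (Hiff : 0 < g s * c <-> 0 < g s0 * c).
        { destruct (Rle_dec s s0).
          - exact (Hsg s s0 Hs Hs0 r).
          - symmetry. exact (Hsg s0 s Hs0 Hs ltac:(lra)). }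
        destruct (HC s Hs) as (_&Hg&_). destruct (HC s0 Hs0) as (_&Hg0&_).
        destruct (Rlt_or_le 0 (g s)), (Rlt_or_le 0 (g s0)), (Rlt_or_le 0 c);
        first [ (rewrite !sgn_pos by lra; reflexivity) | (rewrite !sgn_neg by lra; reflexivity)
              | (exfalso; destruct Hiff; nra) ].
      * exists gam', l, 0. split; [exact Hl|]. intros s Hs. exfalso. apply Hne. eauto.
Qed.
End Core.
Lemma y1d (theta S C : R -> R) c12 c13 s k :
  is_derive theta s k -> is_derive S s (sin (theta s)) -> is_derive C s (cos (theta s)) ->
  is_derive (fun t => - sin (theta t) * (S t - c12) - cos (theta t) * (C t + c13)) s
    (-1 + k * (c12 * cos (theta s) + c13 * sin (theta s) - S s * cos (theta s) + C s * sin (theta s))).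
Proof.
  intros Ht HS HC.
  auto_derive.
  - repeat split; eexists; eassumption.
  - replace (Derive (fun x => theta x) s) with k by (symmetry; exact (is_derive_unique _ _ _ Ht)).
    replace (Derive (fun x => S x) s) with (sin (theta s)) by (symmetry; exact (is_derive_unique _ _ _ HS)).
    replace (Derive (fun x => C x) s) with (cos (theta s)) by (symmetry; exact (is_derive_unique _ _ _ HC)).
    pose proof (sin2_cos2 (theta s)). unfold Rsqr in H. nra.
Qed.
Lemma y2d (theta S C : R -> R) c12 c13 s k :
  is_derive theta s k -> is_derive S s (sin (theta s)) -> is_derive C s (cos (theta s)) ->
  is_derive (fun t => c12 * cos (theta t) + c13 * sin (theta t) - S t * cos (theta t) + C t * sin (theta t)) s
    (- k * (- sin (theta s) * (S s - c12) - cos (theta s) * (C s + c13))).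
Proof.
  intros Ht HS HC.
  auto_derive.
  - repeat split; eexists; eassumption.
  - replace (Derive (fun x => theta x) s) with k by (symmetry; exact (is_derive_unique _ _ _ Ht)).
    replace (Derive (fun x => S x) s) with (sin (theta s)) by (symmetry; exact (is_derive_unique _ _ _ HS)).
    replace (Derive (fun x => C x) s) with (cos (theta s)) by (symmetry; exact (is_derive_unique _ _ _ HC)).
    ring.
Qed.

Lemma vderive_eq f s d1 d2 : vderive f s d1 -> d1 = d2 -> vderive f s d2.
Proof. intros H ->; exact H. Qed.

Theorem theorem3p30 (a b : Rbar) (alpha T V U : R -> vec3) (kg kn taug : R -> R)
    (gamma : R -> vec3) :
  darboux_frame a b alpha T V U kg kn taug ->
  (case_a a b alpha T V kg gamma \/ case_b a b alpha T V kg gamma) ->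
  regular_on a b gamma ->
  (general_helix a b gamma <-> isophote a b U).
Proof.
  intros HF Hcase [gr Hgr].
  destruct Hcase as [[c10 [c11 Ha]] | [theta [S [C [c12 [c13 Hb]]]]]].
  - apply (core a b gamma U (fun s => (c10 - s) * kn s + c11 * taug s)).
    intros s Hs. destruct (HF s Hs) as (Ha1&HT&HU&HUT&HV&DT&DV&DU).
    destruct (Ha s Hs) as [Hkg Heq].
    assert (D1 : is_derive (fun u => c10 - u) s (-1)) by (auto_derive; try ring; auto).
    assert (D2 : is_derive (fun _ => c11) s 0) by apply D_const.
    assert (D : vderive gamma s (vscale ((c10 - s) * kn s + c11 * taug s) (U s))).
    { apply (vderive_ext_loc (fun t => vadd (alpha t) (vadd (vscale ((fun u => c10 - u) t) (T t)) (vscale ((fun _ => c11) t) (V t))))).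
      - eapply filter_imp; [|exact (in_I_loc a b s Hs)]. intros t Ht. symmetry. exact (proj2 (Ha t Ht)).
      - eapply vderive_eq; [exact (vderive_comb alpha T V _ _ s _ _ _ _ _ Ha1 DT DV D1 D2)|].
        unfold vadd, vscale; simpl. rewrite Hkg. f_equal; ring. }
    split; [exact D|]. split; [|split; [exact HU|eexists; exact DU]].
    destruct (Hgr s Hs) as [Dg Nz]. rewrite (vderive_unique _ _ _ _ Dg D) in Nz.
    exact (vscale_nz _ _ HU Nz).
  - set (y1 := fun t => - sin (theta t) * (S t - c12) - cos (theta t) * (C t + c13)).
    set (y2 := fun t => c12 * cos (theta t) + c13 * sin (theta t) - S t * cos (theta t) + C t * sin (theta t)).
    apply (core a b gamma U (fun s => y1 s * kn s + y2 s * taug s)).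
    intros s Hs. destruct (HF s Hs) as (Ha1&HT&HU&HUT&HV&DT&DV&DU).
    destruct (Hb s Hs) as (Hkg&Hth&HS&HC&Heq).
    assert (D1 := y1d theta S C c12 c13 s (kg s) Hth HS HC).
    assert (D2 := y2d theta S C c12 c13 s (kg s) Hth HS HC).
    assert (D : vderive gamma s (vscale (y1 s * kn s + y2 s * taug s) (U s))).
    { apply (vderive_ext_loc (fun t => vadd (alpha t) (vadd (vscale (y1 t) (T t)) (vscale (y2 t) (V t))))).
      - eapply filter_imp; [|exact (in_I_loc a b s Hs)]. intros t Ht. symmetry.
        destruct (Hb t Ht) as (_&_&_&_&E). exact E.
      - eapply vderive_eq; [exact (vderive_comb alpha T V y1 y2 s _ _ _ _ _ Ha1 DT DV D1 D2)|].
        unfold vadd, vscale, y1, y2; simpl. f_equal; ring. }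
    split; [exact D|]. split; [|split; [exact HU|eexists; exact DU]].
    destruct (Hgr s Hs) as [Dg Nz]. rewrite (vderive_unique _ _ _ _ Dg D) in Nz.
    exact (vscale_nz _ _ HU Nz).
Qed.
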